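(* For every integer $n\geq 7$ there exists a tree $T$ on $n$ vertices that is neutral, i.e., whose assortativity coefficient satisfies $r(T)=0$.
   Context: All graphs are finite, simple and connected. For a graph $G=(V,E)$ with $m=|E|\geq 1$ edges, let $d_u$ denote the degree of vertex $u$ and write sums over edges $e_{uv}\in E$ (each edge counted once). The assortativity coefficient of $G$ is $$r(G)=\frac{m^{-1}\sum_{e_{uv}\in E} d_{u}d_{v}-\Big[m^{-1}\sum_{e_{uv}\in E} \tfrac{1}{2}(d_{u}+d_{v})\Big]^{2}}{m^{-1}\sum_{e_{uv}\in E} \tfrac{1}{2}(d^{2}_{u}+d^{2}_{v})-\Big[m^{-1}\sum_{e_{uv}\in E} \tfrac{1}{2}(d_{u}+d_{v})\Big]^{2}},$$ defined whenever the denominator is nonzero. $G$ is called neutral if $r(G)$ is defined and $r(G)=0$. *)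

(* Defs.v *)
From mathcomp Require Import all_boot all_order all_algebra.
Set Implicit Arguments. Unset Strict Implicit. Unset Printing Implicit Defensive.
Import Order.TTheory GRing.Theory Num.Theory.
Local Open Scope ring_scope.

Definition simple_graph (n : nat) (e : rel 'I_n) : Prop :=
  irreflexive e /\ symmetric e.

Definition connected_graph (n : nat) (e : rel 'I_n) : Prop :=
  forall x y : 'I_n, connect e x y.

Definition acyclic_graph (n : nat) (e : rel 'I_n) : Prop :=
  ~ (exists s : seq 'I_n, [/\ (3 <= size s)%N, uniq s & cycle e s]).

Definition is_tree (n : nat) (e : rel 'I_n) : Prop :=
  [/\ simple_graph e, connected_graph e & acyclic_graph e].

Definition deg (n : nat) (e : rel 'I_n) (u : 'I_n) : nat := #|[set v | e u v]|.

Definition edge_sum (n : nat) (e : rel 'I_n) (F : 'I_n -> 'I_n -> rat) : rat :=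
  \sum_(u : 'I_n) \sum_(v : 'I_n | (u < v)%N && e u v) F u v.

Definition nedges (n : nat) (e : rel 'I_n) : nat :=
  #|[set p : 'I_n * 'I_n | (p.1 < p.2)%N && e p.1 p.2]|.

Definition assort_mean (n : nat) (e : rel 'I_n) : rat :=
  (nedges e)%:R^-1 * edge_sum e (fun u v => 2^-1 * ((deg e u)%:R + (deg e v)%:R)).

Definition assort_num (n : nat) (e : rel 'I_n) : rat :=
  (nedges e)%:R^-1 * edge_sum e (fun u v => (deg e u)%:R * (deg e v)%:R)
  - (assort_mean e) ^+ 2.

Definition assort_den (n : nat) (e : rel 'I_n) : rat :=
  (nedges e)%:R^-1 * edge_sum e (fun u v => 2^-1 * ((deg e u)%:R ^+ 2 + (deg e v)%:R ^+ 2))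
  - (assort_mean e) ^+ 2.

Definition assortativity (n : nat) (e : rel 'I_n) : rat :=
  assort_num e / assort_den e.

(* Neutral: m >= 1, r(G) is defined (denominator nonzero) and r(G) = 0. *)
Definition neutral (n : nat) (e : rel 'I_n) : Prop :=
  [/\ (1 <= nedges e)%N, assort_den e != 0 & assortativity e = 0].

(* Main.v *)
Require Import Defs.
From mathcomp Require Import all_boot all_order all_algebra.
From mathcomp Require Import zify ring lra.
Set Implicit Arguments. Unset Strict Implicit. Unset Printing Implicit Defensive.
Import Order.TTheory GRing.Theory Num.Theory.

Definition pr (m k : nat) : nat := if k == m + 5 then 2 else k.-1.

Definition tr (m : nat) : rel 'I_(m.+4.+3) :=
  fun u v => ((0 < v) && (nat_of_ord u == pr m v)) || ((0 < u) && (nat_of_ord v == pr m u)).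

Lemma pr_lt m k : 0 < k -> pr m k < k.
Proof. rewrite /pr; case: ifP => ?; lia. Qed.

Lemma pr_le m k : pr m k <= k.
Proof. rewrite /pr; case: ifP => ?; lia. Qed.

Lemma tr_sym m : symmetric (@tr m).
Proof. by move=> u v; rewrite /tr orbC. Qed.

Lemma tr_irr m : irreflexive (@tr m).
Proof.
move=> u; rewrite /tr orbb; apply/negbTE; apply/negP => /andP [h /eqP e].
have := pr_lt m h. lia.
Qed.

Lemma tr_down m (x y : 'I_(m.+4.+3)) : @tr m x y -> nat_of_ord y < nat_of_ord x -> nat_of_ord y = pr m x.
Proof.
rewrite /tr => /orP [/andP [h /eqP e] | /andP [h /eqP e]] lt //.
have := pr_lt m h; lia.
Qed.

Lemma conn0 m : forall k (x : 'I_(m.+4.+3)), nat_of_ord x <= k -> connect (@tr m) x (inord 0).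
Proof.
elim=> [|k IH] x hx.
  have -> : x = inord 0 by apply/val_inj; rewrite /= inordK; lia.
  exact: connect0.
case: (posnP (nat_of_ord x)) => h0.
  have -> : x = inord 0 by apply/val_inj; rewrite /= inordK; lia.
  exact: connect0.
have hp : pr m x < m.+4.+3 by have := pr_le m x; have := ltn_ord x; lia.
apply: (connect_trans (y := inord (pr m x))).
  apply: connect1; rewrite /tr inordK // h0 eqxx; apply/orP; right => //.
apply: IH; rewrite inordK //; have := pr_lt m h0; lia.
Qed.

Lemma tr_connected m : connected_graph (@tr m).
Proof.
move=> x y; apply: (connect_trans (conn0 (leqnn x))).
by rewrite (sym_connect_sym (@tr_sym m)); apply: conn0.
Qed.

Lemma tr_acyclic m : acyclic_graph (@tr m).
Proof.
move=> [s [h3 hu hc]].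
have hA : 0 < #|[pred i | i \in s]|.
  case: s h3 {hu hc} => [|a s] //= _; apply/card_gt0P; exists a; rewrite !inE eqxx //=.
have [x xs hmax] := eq_bigmax_cond (fun i : 'I_(m.+4.+3) => nat_of_ord i) hA.
have hle : forall y, y \in s -> nat_of_ord y <= nat_of_ord x.
  by move=> y ys; rewrite -hmax; apply: leq_bigmax_cond; rewrite inE.
have [i s' hr] := rot_to xs.
have hu' : uniq (x :: s') by rewrite -hr rot_uniq.
have hc' : cycle (@tr m) (x :: s') by rewrite -hr rot_cycle.
have hs' : forall y, y \in s' -> y \in s.
  by move=> y ys; rewrite -(mem_rot i) hr inE ys orbT.
have h3' : 2 <= size s' by move: h3; rewrite -(size_rot i) hr /=.
case: s' hr hu' hc' hs' h3' => [|a t] // hr hu' hc' hs' h3'.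
case/lastP: t hr hu' hc' hs' h3' => [|t b] // hr hu' hc' hs' _.
move: hc'; rewrite /= rcons_path /= last_rcons => /and3P [ha _ hb].
have ainS : a \in s by apply: hs'; rewrite mem_head.
have binS : b \in s by apply: hs'; rewrite inE mem_rcons mem_head orbT.
move: hu'; rewrite /= => /andP [hx /andP [ha' _]].
have xa : x != a by apply: contraNneq hx => ->; rewrite mem_head.
have xb : x != b by apply: contraNneq hx => ->; rewrite inE mem_rcons mem_head orbT.
have ab : a != b by apply: contraNneq ha' => ->; rewrite mem_rcons mem_head.
have ea : nat_of_ord a = pr m x.
  apply: tr_down ha _; have := hle a ainS; have : nat_of_ord x != nat_of_ord a by rewrite (inj_eq val_inj). lia.
have eb : nat_of_ord b = pr m x.
  rewrite tr_sym in hb.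
  apply: tr_down hb _; have := hle b binS; have : nat_of_ord x != nat_of_ord b by rewrite (inj_eq val_inj). lia.
by move: ab; rewrite -(inj_eq val_inj) /= ea eb eqxx.
Qed.

Lemma tr_tree m : is_tree (@tr m).
Proof.
split; [split; [exact: tr_irr | exact: tr_sym] | exact: tr_connected | exact: tr_acyclic].
Qed.
Open Scope ring_scope.

Definition nbrs (m k : nat) : seq nat :=
  if k == 0%N then [:: 1%N]
  else if k == 1%N then [:: 0%N; 2%N]
  else if k == 2%N then [:: 1%N; 3%N; (m + 5)%N]
  else if k == (m + 4)%N then [:: (m + 3)%N]
  else if k == (m + 5)%N then [:: 2%N; (m + 6)%N]
  else if k == (m + 6)%N then [:: (m + 5)%N]
  else [:: k.-1; k.+1].

Definition D (m k : nat) : nat := size (nbrs m k).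

Lemma cardL n (L : seq nat) : uniq L -> all (fun k => k < n)%N L ->
  #|[set v : 'I_n | nat_of_ord v \in L]| = size L.
Proof.
elim: L => [|k L IH] /=.
  move=> _ _; apply/eqP; rewrite cards_eq0; apply/eqP/setP => v; by rewrite !inE.
move=> /andP [kL uL] /andP [kn aL].
have -> : [set v : 'I_n | nat_of_ord v \in k :: L] = Ordinal kn |: [set v | nat_of_ord v \in L].
  by apply/setP => v; rewrite !inE -(inj_eq val_inj).
by rewrite cardsU1 IH // inE /= kL.
Qed.

Lemma degE m k : (k < m.+4.+3)%N -> deg (@tr m) (inord k) = D m k.
Proof.
move=> hk; rewrite /deg /D -(@cardL m.+4.+3).
- apply: eq_card => v; rewrite !inE /tr inordK //.
  have := ltn_ord v; rewrite /pr /nbrs; do ![case: ifP => ?]; rewrite ?inE; lia.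
- rewrite /nbrs; do ![case: ifP => ?]; rewrite /= ?inE; lia.
- rewrite /nbrs; do ![case: ifP => ?]; rewrite /= ?inE; lia.
Qed.

Lemma edge_sumE m F : edge_sum (@tr m) F =
  \sum_(1 <= k < m.+4.+3) F (inord (pr m k)) (inord k).
Proof.
rewrite /edge_sum (exchange_big_dep xpredT) //=.
transitivity (\sum_(v : 'I_(m.+4.+3)) (if (0 < v)%N then F (inord (pr m v)) (inord v) else 0)).
  apply: eq_bigr => v _; case: (posnP v) => hv.
    rewrite /= big_pred0 // => u; rewrite hv ltn0 //.
  rewrite inord_val (big_pred1 (inord (pr m v))) // => u /=.
  have hp : (pr m v < m.+4.+3)%N by have := pr_le m v; have := ltn_ord v; lia.
  rewrite -(inj_eq val_inj) /= inordK // /tr.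
  rewrite /pr; do ![case: ifP => ?]; lia.
rewrite -(big_mkord xpredT (fun k => if (0 < k)%N then F (inord (pr m k)) (inord k) else 0)).
rewrite big_ltn // /= add0r; apply: eq_big_nat => k /andP [h _]; by rewrite h.
Qed.

Lemma edge_sumD m (f : nat -> nat -> rat) :
  edge_sum (@tr m) (fun u v => f (deg (@tr m) u) (deg (@tr m) v)) =
  \sum_(1 <= k < m.+4.+3) f (D m (pr m k)) (D m k).
Proof.
rewrite edge_sumE; apply: eq_big_nat => k /andP [h1 h2].
have hp : (pr m k < m.+4.+3)%N by have := pr_le m k; lia.
by rewrite !degE.
Qed.

Lemma split_sum m (H : nat -> rat) c : (forall k, (4 <= k < m.+4)%N -> H k = c) ->
  \sum_(1 <= k < m.+4.+3) H k =
  H 1%N + H 2%N + H 3%N + c *+ m + H m.+4 + H m.+4.+1 + H m.+4.+2.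
Proof.
move=> hc.
rewrite (@big_cat_nat _ _ _ 4 1 m.+4.+3) // (@big_cat_nat _ _ _ m.+4 4 m.+4.+3) //.
rewrite (eq_big_nat _ _ hc) sumr_const_nat.
have -> : (m.+4 - 4 = m)%N by lia.
rewrite {1}/index_iota /= !big_cons big_nil.
rewrite /index_iota (_ : (m.+4.+3 - m.+4 = 3)%N); last by lia.
rewrite /= !big_cons big_nil !addr0 !addrA.
by [].
lia.
Qed.

Lemma D0 m : D m 0 = 1%N.
Proof. rewrite /D /nbrs; do ![case: ifP => ?] => //=; lia. Qed.
Lemma D1 m : D m 1 = 2%N.
Proof. rewrite /D /nbrs; do ![case: ifP => ?] => //=; lia. Qed.
Lemma D2 m : D m 2 = 3%N.
Proof. rewrite /D /nbrs; do ![case: ifP => ?] => //=; lia. Qed.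
Lemma Dmid m k : (3 <= k < m.+4)%N -> D m k = 2%N.
Proof. move=> h; rewrite /D /nbrs; do ![case: ifP => ?] => //=; lia. Qed.
Lemma D4 m : D m m.+4 = 1%N.
Proof. rewrite /D /nbrs; do ![case: ifP => ?] => //=; lia. Qed.
Lemma D5 m : D m m.+4.+1 = 2%N.
Proof. rewrite /D /nbrs; do ![case: ifP => ?] => //=; lia. Qed.
Lemma D6 m : D m m.+4.+2 = 1%N.
Proof. rewrite /D /nbrs; do ![case: ifP => ?] => //=; lia. Qed.

Lemma sum_f m (f : nat -> nat -> rat) :
  \sum_(1 <= k < m.+4.+3) f (D m (pr m k)) (D m k) =
  f 1%N 2%N + f 2%N 3%N + f 3%N 2%N + f 2%N 2%N *+ m + f 2%N 1%N + f 3%N 2%N + f 2%N 1%N.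
Proof.
rewrite (split_sum (c := f 2%N 2%N)).
  have p1 : pr m 1 = 0%N by rewrite /pr; case: ifP => ?; lia.
  have p2 : pr m 2 = 1%N by rewrite /pr; case: ifP => ?; lia.
  have p3 : pr m 3 = 2%N by rewrite /pr; case: ifP => ?; lia.
  have p4 : pr m m.+4 = m.+3 by rewrite /pr; case: ifP => ?; lia.
  have p5 : pr m m.+4.+1 = 2%N by rewrite /pr; case: ifP => ?; lia.
  have p6 : pr m m.+4.+2 = m.+4.+1 by rewrite /pr; case: ifP => ?; lia.
  rewrite p1 p2 p3 p4 p5 p6 D0 D1 D2 D4 D5 D6 (@Dmid m 3) ?(@Dmid m m.+3) //; lia.
move=> k hk.
have -> : pr m k = k.-1 by rewrite /pr; case: ifP => ?; lia.
rewrite !Dmid //; lia.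
Qed.

Lemma nedgesE m : nedges (@tr m) = m.+4.+2.
Proof.
apply/eqP; rewrite -(eqr_nat rat) -[X in _ == X]/((m.+4.+2)%:R).
have -> : (nedges (@tr m))%:R = edge_sum (@tr m) (fun _ _ => 1) :> rat.
  rewrite /nedges -sum1_card natr_sum /edge_sum pair_big_dep /=.
  by apply: eq_bigl => p; rewrite inE.
rewrite edge_sumE sumr_const_nat.
by rewrite -[X in _ == X]mulr1n (_ : (m.+4.+3 - 1 = m.+4.+2)%N) //; lia.
Qed.

Lemma e6 m : ((m.+4.+2)%:R : rat) = m%:R + 6.
Proof. by rewrite -natrD addnC. Qed.

Lemma meanE m : assort_mean (@tr m) = 2.
Proof.
rewrite /assort_mean nedgesE.
rewrite (edge_sumD m (fun a b => 2^-1 * (a%:R + b%:R))) (sum_f m (fun a b => 2^-1 * (a%:R + b%:R))) /=.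
rewrite -mulr_natr.
have hm : 0 <= m%:R :> rat by apply: ler0n.
rewrite e6.
field. lra.
Qed.

Theorem theorem2 (n : nat) : (7 <= n)%N ->
  exists e : rel 'I_n, is_tree e /\ neutral e.
Proof.
move=> hn; have [m ->] : exists m, n = m.+4.+3 by exists (n - 7)%N; lia.
exists (@tr m); split; first exact: tr_tree.
have hm : 0 <= m%:R :> rat by apply: ler0n.
have hnum : assort_num (@tr m) = 0.
  rewrite /assort_num meanE nedgesE.
  rewrite (edge_sumD m (fun a b => a%:R * b%:R)) (sum_f m (fun a b => a%:R * b%:R)) /=.
  rewrite -mulr_natr e6.
  field. lra.
have hden : assort_den (@tr m) = 3 / (m%:R + 6).
  rewrite /assort_den meanE nedgesE.
  rewrite (edge_sumD m (fun a b => 2^-1 * (a%:R ^+ 2 + b%:R ^+ 2))) (sum_f m (fun a b => 2^-1 * (a%:R ^+ 2 + b%:R ^+ 2))) /=.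
  rewrite -mulr_natr e6.
  field. lra.
split.
- by rewrite nedgesE.
- rewrite hden; apply/eqP => h.
  have : 3 / (m%:R + 6) > 0 :> rat by apply: divr_gt0; lra.
  rewrite h; lra.
- by rewrite /assortativity hnum mul0r.
Qed.
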